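(* Let $D$ be a strong nonseparable digraph, let $H$ be a strong nonseparable subdigraph of $D$, and let $P=(x_0,x_1,\ldots,x_{r-1},x_r)$ be an ear of $H$ in $D$ with length $l(P)=r\geq 2$. Suppose $H$ has a kernel $N$ and one of the following holds: (1) $x_0,x_r\in N$ and $l(P)$ is even; (2) $x_0\in N$, $x_r\notin N$ and $l(P)$ is odd; (3) $x_0\notin N$ and $x_r\in N$; (4) $x_0,x_r\notin N$. Then $H'=H\cup P$ has a kernel.
   Context: All digraphs are finite, without loops or multiple arcs. Paths and cycles are directed; the length of a path is its number of arcs. A digraph is strong if for every ordered pair of vertices $x,y$ there is a directed path from $x$ to $y$; it is nonseparable if its underlying undirected graph is nonseparable (has no cut vertex). For a subdigraph $H$ of $D$, an ear of $H$ in $D$ is a directed path $(x_0,\ldots,x_r)$ in $D$ whose end vertices $x_0,x_r$ lie in $H$ and whose internal vertices $x_1,\ldots,x_{r-1}$ do not lie in $H$ (or a directed cycle with exactly one vertex $x_0=x_r$ in $H$). A kernel of a digraph is a set $N$ of vertices that is independent (no arc between two of its vertices) and absorbent (every vertex not in $N$ has an out-neighbour in $N$). *)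

(* Defs.v *)
From mathcomp Require Import all_boot.
Set Implicit Arguments. Unset Strict Implicit. Unset Printing Implicit Defensive.

(* A digraph D on a finite vertex type T is an arc relation e : rel T
   (loopless: irreflexive; no multiple arcs by construction). *)

Definition is_subdigraph (T : finType) (e : rel T) (V : {set T}) (E : rel T) :=
  forall x y, E x y -> [&& x \in V, y \in V & e x y].

Definition strong (T : finType) (V : {set T}) (E : rel T) :=
  forall x y, x \in V -> y \in V -> connect E x y.

(* nonseparable: the underlying undirected graph is connected and has no
   cut vertex (removing any vertex v leaves the rest connected). *)
Definition und_conn_avoid (T : finType) (E : rel T) (v : option T) : rel T :=
  [rel a b | [&& Some a != v, Some b != v & (E a b || E b a)]].

Definition nonseparable (T : finType) (V : {set T}) (E : rel T) :=
  (forall x y, x \in V -> y \in V -> connect (und_conn_avoid E None) x y) /\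
  (forall v x y, v \in V -> x \in V -> y \in V -> x != v -> y != v ->
     connect (und_conn_avoid E (Some v)) x y).

Definition kernel (T : finType) (V : {set T}) (E : rel T) (N : {set T}) :=
  [/\ N \subset V,
      (forall x y, x \in N -> y \in N -> ~~ E x y) &
      (forall x, x \in V -> x \notin N -> exists2 y, y \in N & E x y)].

(* An ear (x0, x1, ..., xr) of H, written as x0 and s = [:: x1; ...; xr]:
   a directed path of D with end vertices in VH and internal vertices outside
   VH; its vertices are pairwise distinct except that x0 = xr is allowed
   (the directed-cycle case).  Since x0 \in VH and internal vertices are not,
   distinctness amounts to uniq s. *)
Definition ear (T : finType) (e : rel T) (V : {set T}) (x0 : T) (s : seq T) :=
  [/\ path e x0 s, x0 \in V, last x0 s \in V,
      (forall z, z \in take (size s).-1 s -> z \notin V) & uniq s].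

Definition ear_union_V (T : finType) (V : {set T}) (x0 : T) (s : seq T) : {set T} :=
  V :|: [set z | z \in x0 :: s].
Definition ear_union_E (T : finType) (E : rel T) (x0 : T) (s : seq T) : rel T :=
  [rel x y | E x y || ((x, y) \in zip (x0 :: s) s)].

(* Main.v *)
Require Import Defs.
From mathcomp Require Import all_boot.
From mathcomp Require Import zify.

Lemma zip_memP (T : eqType) (x0 : T) (s : seq T) x y :
  reflect (exists2 k, k < size s & x = nth x0 (x0 :: s) k /\ y = nth x0 s k)
          ((x, y) \in zip (x0 :: s) s).
Proof.
have Hsz : size (zip (x0 :: s) s) = size s.
  by rewrite size_zip /=; apply/minn_idPr.
apply: (iffP idP).
- move/(nthP (x0, x0)) => [k]; rewrite Hsz => Hk.
  rewrite nth_zip_cond Hsz Hk /= => [[<- <-]]; by exists k.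
- move=> [k Hk [-> ->]]; apply/(nthP (x0, x0)); exists k; first by rewrite Hsz.
  by rewrite nth_zip_cond Hsz Hk.
Qed.

Theorem mainTheorem9 (T : finType) (e : rel T) (VH : {set T}) (eH : rel T)
    (x0 : T) (s : seq T) (N : {set T}) :
  irreflexive e ->
  strong [set: T] e -> nonseparable [set: T] e ->
  is_subdigraph e VH eH -> strong VH eH -> nonseparable VH eH ->
  ear e VH x0 s -> 2 <= size s ->
  kernel VH eH N ->
  [\/ [/\ x0 \in N, last x0 s \in N & ~~ odd (size s)],
      [/\ x0 \in N, last x0 s \notin N & odd (size s)],
      x0 \notin N /\ last x0 s \in N
    | x0 \notin N /\ last x0 s \notin N] ->
  exists N' : {set T}, kernel (ear_union_V VH x0 s) (ear_union_E eH x0 s) N'.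
Proof.
move=> _ _ _ Hsub _ _ [_ Hx0 Hlast Hint Huniq] Hr [NV Nind Nabs] Hcase.
set r := size s in Hr *.
set p := last x0 s \notin N.
set I := [set z | [exists j : 'I_r, [&& j < r.-1, z == nth x0 s j & odd (r - j.+1) == p]]].
have Fint : forall j, j < r.-1 -> nth x0 s j \notin VH.
  move=> j Hj; apply: Hint; rewrite -(nth_take _ Hj); apply: mem_nth.
  by rewrite size_takel // leq_pred.
have Flast : nth x0 s r.-1 = last x0 s by rewrite nth_last.
have FI : forall z, z \in I -> exists2 j, j < r.-1 & z = nth x0 s j /\ odd (r - j.+1) = p.
  move=> z; rewrite inE => /existsP [j /and3P [Hj /eqP -> /eqP Hp]].
  by exists j.
have FIn : forall j, j < r.-1 -> (nth x0 s j \in I) = (odd (r - j.+1) == p).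
  move=> j Hj; apply/idP/idP.
  - move/FI => [k Hk [Heq Hp]].
    have Hj' : j < size s by rewrite -/r; lia.
    have Hk' : k < size s by rewrite -/r; lia.
    move: Heq => /eqP; rewrite nth_uniq //.
    by move/eqP => ->; rewrite Hp.
  - move=> Hp; rewrite inE; apply/existsP.
    have Hjr : j < r by lia.
    by exists (Ordinal Hjr); rewrite /= Hj eqxx Hp.
have IV : forall z, z \in I -> z \notin VH.
  by move=> z /FI [j Hj [-> _]]; apply: Fint.
have FN : forall j, j < r.-1 -> (nth x0 s j \in N :|: I) = (odd (r - j.+1) == p).
  move=> j Hj; rewrite in_setU FIn //.
  case HN: (nth x0 s j \in N) => //.
  by move: (Fint j Hj); rewrite (subsetP NV _ HN).
have FV : forall z, z \in VH -> (z \in N :|: I) = (z \in N).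
  move=> z Hz; rewrite in_setU; case HI: (z \in I); last by rewrite orbF.
  by move: (IV z HI); rewrite Hz.
exists (N :|: I); split.
- apply/subsetP => z; rewrite in_setU => /orP [Hz|/FI [j Hj [-> _]]].
  + by rewrite /ear_union_V in_setU (subsetP NV z Hz).
  + rewrite /ear_union_V !inE mem_nth ?orbT //; rewrite -/r; lia.
- move=> x y Hx Hy /=; apply/negP => /orP [Hxy| /zip_memP [k Hk [Ex Ey]]].
  + have /and3P [xV yV _] := Hsub _ _ Hxy.
    have xN : x \in N by move: Hx; rewrite in_setU => /orP [//|/IV]; rewrite xV.
    have yN : y \in N by move: Hy; rewrite in_setU => /orP [//|/IV]; rewrite yV.
    by move: (Nind x y xN yN); rewrite Hxy.
  + have [Hk1|Hk1] := eqVneq k r.-1.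
    * move: Hy; rewrite Ey Hk1 Flast FV // => yN.
      have Hk2 : k.-1 < r.-1 by rewrite -/r in Hk; lia.
      have Ex' : x = nth x0 s k.-1.
        have Hk0 : k = k.-1.+1 by move: Hk Hr Hk1; rewrite -/r; lia.
        by rewrite Ex {1}Hk0.
      move: Hx; rewrite Ex' FN // /p yN /=.
      have -> : r - k.-1.+1 = 1 by rewrite -/r in Hk; lia.
      by [].
    * have Hk2 : k < r.-1 by rewrite -/r in Hk; lia.
      move: Hy; rewrite Ey FN // => /eqP Hpy.
      case: k Ex Ey Hk Hk1 Hk2 Hpy => [|k'] Ex Ey Hk Hk1 Hk2 Hpy.
      - move: Hx; rewrite Ex /= FV // => Hx0N.
        move: Hcase Hpy; rewrite /p Hx0N /=.
        case=> [[_ -> Hodd]|[_ -> Hodd]|[]|[]] //=.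
        + rewrite oddB; last by move: Hr; rewrite -/r; lia.
          by move: Hodd; rewrite -/r => /negbTE ->.
        + rewrite oddB; last by move: Hr; rewrite -/r; lia.
          by move: Hodd; rewrite -/r => ->.
      - move: Hx; rewrite Ex /= FN; last lia.
        move=> /eqP Hpx; move: Hpy; rewrite -Hpx.
        have -> : r - k'.+2 = (r - k'.+1).-1 by lia.
        have : 0 < r - k'.+1 by lia.
        by case: (r - k'.+1) => [|m] //= _; case: (odd m).
- move=> x Hx HxN.
  case HxV: (x \in VH).
    rewrite FV // in HxN.
    have [y yN Hxy] := Nabs x HxV HxN.
    by exists y; [rewrite in_setU yN | rewrite /ear_union_E /= Hxy].
  move: Hx; rewrite /ear_union_V in_setU HxV /= inE in_cons => /orP [/eqP Ex0|Hxs].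
    by move: HxV; rewrite Ex0 Hx0.
  move: Hxs => /(nthP x0) [j Hj Ej].
  have Hj1 : j != r.-1.
    by apply/eqP => Hj1; move: HxV; rewrite -Ej Hj1 Flast Hlast.
  have Hj2 : j < r.-1 by move: Hj Hj1; rewrite -/r; lia.
  move: HxN; rewrite -Ej FN // => Hpx.
  exists (nth x0 s j.+1).
    have [Hj3|Hj3] := eqVneq j.+1 r.-1.
    + rewrite Hj3 Flast FV //.
      move: Hpx; rewrite /p.
      have -> : r - j.+1 = 1 by move: Hj3 Hr; rewrite -/r; lia.
      by case: (last x0 s \in N).
    + rewrite FN; last by move: Hj2 Hj3; lia.
      move: Hpx.
      have -> : r - j.+2 = (r - j.+1).-1 by lia.
      have : 0 < r - j.+1 by lia.
      by case: (r - j.+1) => [|m] //= _; move: (odd m) (p) => a b; case: a; case: b.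
  apply/orP; right; apply/zip_memP.
  exists j.+1 => //; by move: Hj2; rewrite -/r; lia.
Qed.
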